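(* Let $\lambda,\mu$ be partitions with $\mathrm{core}(\lambda)=\mathrm{core}(\mu)$, and write $\mathrm{quot}(\lambda)=(\lambda^0,\dots,\lambda^{\ell-1})$, $\mathrm{quot}(\mu)=(\mu^0,\dots,\mu^{\ell-1})$. If $|\lambda^i|=|\mu^i|$ and $\lambda^i\ge\mu^i$ in dominance order for every $i$, then $\lambda\ge\mu$ in dominance order.
   Context: Fix $\ell\ge1$. Nodes of a partition $\lambda$ are $(a,b)$ with $1\le a\le\lambda_b$; content $b-a$. Let $n_j(\lambda)$ be the number of nodes of content $j$. Maya diagram $m(\lambda):\mathbb{Z}\to\{\pm1\}$: for $j\ge0$, $m(\lambda)(j)=-1$ if $n_{j+1}-n_j=-1$, else $1$; for $j<0$, $m(\lambda)(j)=1$ if $n_{j+1}-n_j=1$, else $-1$. Charge of $m$: $\#\{j<0:m(j)=-1\}-\#\{j\ge0:m(j)=1\}$; charge-zero Maya diagrams correspond bijectively to partitions. For $0\le i\le\ell-1$, $m_i(j)=m(\lambda)(i+j\ell)$ has charge $c_i$, and its unique charge-zero translate is the Maya diagram of a partition $\lambda^i$. $\mathrm{quot}(\lambda)=(\lambda^0,\dots,\lambda^{\ell-1})$ (the $\ell$-quotient) and $\mathrm{core}(\lambda)=(c_0,\dots,c_{\ell-1})$ (encoding the $\ell$-core). *)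

(* Defs.v *)
From mathcomp Require Import all_boot all_order all_algebra.
Set Implicit Arguments. Unset Strict Implicit. Unset Printing Implicit Defensive.
Import Order.TTheory GRing.Theory Num.Theory.
Local Open Scope ring_scope.

(* A partition: a weakly decreasing sequence of positive naturals
   (lambda_1 >= lambda_2 >= ... > 0); lambda_b = nth 0 lam b.-1. *)
Definition is_partition (lam : seq nat) : bool :=
  sorted geq lam && all (fun x => (0 < x)%N) lam.

(* n_j(lambda): number of nodes (a,b), 1 <= a <= lambda_b, of content b - a = j. *)
Definition ncont (lam : seq nat) (j : int) : nat :=
  count (fun b : nat => (0 < b%:Z - j) && (b%:Z - j <= (nth 0%N lam b.-1)%:Z))
        (iota 1 (size lam)).

Definition maya (lam : seq nat) (j : int) : int :=
  let d := (ncont lam (j + 1))%:Z - (ncont lam j)%:Z in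
  if 0 <= j then (if d == -1 then -1 else 1)
  else (if d == 1 then 1 else -1).

(* Charge of a Maya diagram m which equals 1 on [N, oo) and -1 on (-oo, -N):
   #{j<0 : m j = 1} - #{j>=0 : m j = -1}, both counts taken in the window [-N, N). *)
Definition charge_win (N : nat) (m : int -> int) : int :=
  (count (fun k : nat => m (- (k.+1)%:Z) == 1) (iota 0 N))%:Z
  - (count (fun k : nat => m k%:Z == -1) (iota 0 N))%:Z.

Definition maya_comp (l : nat) (lam : seq nat) (i : nat) (j : int) : int :=
  maya lam (i%:Z + j * l%:Z).

(* c_i = charge of m_i. The window N = size lam + sumn lam + l is large enough:
   m_i(j) = 1 for j >= size lam and m_i(j) = -1 for j < -(lambda_1 + i). *)
Definition core_comp (l : nat) (lam : seq nat) (i : nat) : int :=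
  charge_win (size lam + sumn lam + l) (maya_comp l lam i).

Definition core (l : nat) (lam : seq nat) : seq int :=
  [seq core_comp l lam i | i <- iota 0 l].

(* nu is the i-th component lambda^i of the l-quotient: nu is the partition whose
   Maya diagram is the (charge-zero) translate of m_i. *)
Definition is_quot_comp (l : nat) (lam : seq nat) (i : nat) (nu : seq nat) : Prop :=
  is_partition nu /\
  exists k : int, forall j : int, maya nu j = maya_comp l lam i (j + k).

Definition dominates (lam mu : seq nat) : Prop :=
  forall k : nat, (sumn (take k mu) <= sumn (take k lam))%N.

(* Main.v *)
Require Import Defs.
From mathcomp Require Import all_boot all_order all_algebra.
From mathcomp Require Import zify ring lra.
Set Implicit Arguments. Unset Strict Implicit. Unset Printing Implicit Defensive.
Import Order.TTheory GRing.Theory Num.Theory.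
Local Open Scope ring_scope.

Definition ind (b : bool) : int := if b then 1 else 0.
Definition pp (x : int) : int := if 0 <= x then x else 0.
Definition isum (a : int) (n : nat) (F : int -> int) : int :=
  \sum_(0 <= t < n) F (a + t%:Z).

Lemma isum_split a n1 n2 F :
  isum a (n1 + n2) F = isum a n1 F + isum (a + n1%:Z) n2 F.
Proof.
rewrite /isum (@big_cat_nat _ _ _ n1) ?leq_addr //=.
congr (_ + _).
rewrite -{1}[n1]add0n big_addn addKn.
apply: eq_bigr => t _; congr F; rewrite PoszD; ring.
Qed.

Lemma isum0 a F : isum a 0 F = 0.
Proof. by rewrite /isum big_geq. Qed.

Lemma isumS a n F : isum a n.+1 F = isum a n F + F (a + n%:Z).
Proof. by rewrite /isum big_nat_recr. Qed.

Lemma isum_eq a n F G : (forall k, a <= k < a + n%:Z -> F k = G k) ->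
  isum a n F = isum a n G.
Proof.
move=> H; apply: eq_big_nat => t /andP[_ Ht]; apply: H; lia.
Qed.

Lemma isum_zero a n F : (forall k, a <= k < a + n%:Z -> F k = 0) -> isum a n F = 0.
Proof. move=> H; rewrite (isum_eq H) /isum big1 //. Qed.

Lemma isumB a n F G : isum a n (fun k => F k - G k) = isum a n F - isum a n G.
Proof. by rewrite /isum sumrB. Qed.

Lemma isumD a n F G : isum a n (fun k => F k + G k) = isum a n F + isum a n G.
Proof. by rewrite /isum big_split. Qed.

Lemma isumZ a n c F : isum a n (fun k => c * F k) = c * isum a n F.
Proof. by rewrite /isum mulr_sumr. Qed.

Lemma isum_shift a n k F : isum a n (fun j => F (j - k)) = isum (a - k) n F.
Proof. apply: eq_bigr => t _; congr F; ring. Qed.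

Lemma isum_ext a n a' n' F :
  (forall k, (k < a) || (a + n%:Z <= k) -> F k = 0) ->
  a' <= a -> a + n%:Z <= a' + n'%:Z -> isum a' n' F = isum a n F.
Proof.
move=> H h1 h2.
have -> : n' = (absz (a - a') + n + (n' - absz (a - a') - n))%N by lia.
rewrite !isum_split.
have -> : a' + (absz (a - a'))%:Z = a by lia.
have -> : a' + (absz (a - a') + n)%:Z = a + n%:Z by lia.
rewrite (@isum_zero a') ?add0r; last by move=> k hk; apply: H; lia.
rewrite (@isum_zero (a + n%:Z)) ?addr0 //; move=> k hk; apply: H; lia.
Qed.

Lemma isum_pt a n c g : a <= c < a + n%:Z ->
  isum a n (fun k => g k * ind (k == c)) = g c.
Proof.
move=> hc.
rewrite (@isum_ext c 1); first by rewrite /isum big_nat1 /ind addr0 eqxx mulr1.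
- move=> k hk; rewrite /ind; case: eqP => [e|]; last by rewrite mulr0.
  lia.
- lia.
- lia.
Qed.

Lemma isum_ge a n c : a <= c -> isum a n (fun j => ind (c <= j)) = pp (a + n%:Z - c).
Proof.
move=> hc; elim: n => [|n IH]; first by rewrite isum0 /pp; case: ifP; lia.
rewrite isumS IH /pp /ind; do 3 case: ifP; lia.
Qed.

Lemma isum_runner (l : nat) a n F :
  isum (a * l%:Z) (n * l) F =
  \sum_(0 <= i < l) isum a n (fun j => F (i%:Z + j * l%:Z)).
Proof.
elim: n => [|n IH].
  by rewrite mul0n isum0 big1 // => i _; rewrite isum0.
rewrite mulSn addnC isum_split IH.
under [RHS]eq_bigr => i _ do rewrite isumS.
rewrite big_split /=; congr (_ + _).
apply: eq_bigr => i _; congr F; rewrite PoszM; ring.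
Qed.

Lemma count_int (T : Type) (p : pred T) s : (count p s)%:Z = \sum_(x <- s) ind (p x).
Proof.
elim: s => [|x s IH]; first by rewrite big_nil.
by rewrite /= big_cons PoszD IH /ind; case: (p x).
Qed.

Lemma delta lam k : (ncont lam (k+1))%:Z - (ncont lam k)%:Z =
  \sum_(0 <= b < size lam) (ind (k == b%:Z - (nth 0%N lam b)%:Z) - ind (k == b%:Z)).
Proof.
rewrite /ncont !count_int -sumrB.
rewrite -[1%N]addn0 iotaDl big_map /index_iota subn0.
apply: eq_bigr => b _; rewrite add1n /=.
rewrite /ind; do 4 case: ifP; lia.
Qed.

Lemma part_pos lam b : is_partition lam -> (b < size lam)%N -> (0 < nth 0%N lam b)%N.
Proof.
case/andP=> _ /allP H hb; apply: H; exact: mem_nth.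
Qed.

Lemma part_mono lam b1 b2 : is_partition lam -> (b1 <= b2)%N ->
  (nth 0%N lam b2 <= nth 0%N lam b1)%N.
Proof.
case/andP=> Hs _ hb.
case: (ltnP b2 (size lam)) => h2; last by rewrite nth_default.
have h1 : (b1 < size lam)%N by apply: leq_ltn_trans h2.
have := @sorted_leq_nth _ geq (fun y x z h1 h2 => leq_trans h2 h1) (@leqnn) 0%N lam Hs b1 b2.
by apply.
Qed.

Lemma nth_le_sumn (s : seq nat) b : (nth 0%N s b <= sumn s)%N.
Proof.
elim: s b => [|x s IH] [|b] //=; first by apply: leq_addr.
by apply: leq_trans (IH b) (leq_addl _ _).
Qed.

Lemma count_le1 (T : eqType) (p : pred T) s : uniq s ->
  (forall x y, x \in s -> y \in s -> p x -> p y -> x = y) -> (count p s <= 1)%N.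
Proof.
elim: s => [|x s IH] //= /andP[hx hu] H.
case hpx: (p x) => /=.
  suff -> : count p s = 0%N by [].
  apply/eqP; rewrite -leqn0 leqNgt -has_count; apply/hasP => -[y hy py].
  have := H x y; rewrite inE eqxx inE hy orbT => /(_ isT isT hpx py) ey.
  by move: hx; rewrite ey hy.
apply: IH => // a b ha hb; apply: H; rewrite inE ?ha ?hb orbT //.
Qed.

Lemma sum_ind_eq k n : \sum_(0 <= b < n) ind (k == b%:Z) = ind ((0 <= k) && (k < n%:Z)).
Proof.
elim: n => [|n IH]; first by rewrite big_geq // /ind; case: ifP; lia.
rewrite big_nat_recr //= IH /ind; do 3 case: ifP; lia.
Qed.

Lemma sum_ind_c lam k : is_partition lam ->
  let c := \sum_(0 <= b < size lam) ind (k == b%:Z - (nth 0%N lam b)%:Z) in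
  (c = 0 \/ c = 1) /\ ((size lam)%:Z <= k -> c = 0).
Proof.
move=> Hp c.
pose P := (fun b : nat => k == b%:Z - (nth 0%N lam b)%:Z).
have Hc : c = (count P (iota 0 (size lam)))%:Z.
  by rewrite count_int /c /index_iota subn0.
have Hle : (count P (iota 0 (size lam)) <= 1)%N.
  apply: count_le1; first exact: iota_uniq.
  move=> x y; rewrite !mem_iota !add0n => hx hy /eqP ex /eqP ey.
  case: (leqP x y) => hxy.
    have := part_mono Hp hxy; lia.
  have := part_mono Hp (ltnW hxy); lia.
split; first by lia.
move=> hk; rewrite Hc; apply/eqP; rewrite eqz_nat -leqn0 leqNgt -has_count.
apply/hasP => -[b]; rewrite mem_iota add0n => /andP[_ hb] /eqP e.
have := part_pos Hp hb; lia.
Qed.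

Lemma lemD lam k : is_partition lam ->
  ind (maya lam k == 1) - ind (0 <= k) =
  \sum_(0 <= b < size lam) (ind (k == b%:Z - (nth 0%N lam b)%:Z) - ind (k == b%:Z)).
Proof.
move=> Hp.
have [Hc1 Hc2] := sum_ind_c k Hp.
rewrite /maya /= delta sumrB sum_ind_eq.
move: Hc1 Hc2; set c := \sum_(0 <= b < size lam) ind (k == b%:Z - (nth 0%N lam b)%:Z) => Hc1 Hc2.
clearbody c; rewrite /ind; case: Hc1 Hc2 => -> Hc2; case h0: (0 <= k); case h1: (k < (size lam)%:Z) => /=; try lia.
Qed.

Lemma lemM lam a n (g : int -> int) : is_partition lam ->
  a <= - (sumn lam)%:Z -> (size lam)%:Z <= a + n%:Z ->
  isum a n (fun k => g k * (ind (maya lam k == 1) - ind (0 <= k))) =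
  \sum_(0 <= b < size lam) (g (b%:Z - (nth 0%N lam b)%:Z) - g b%:Z).
Proof.
move=> Hp ha hn.
transitivity (\sum_(0 <= b < size lam)
   isum a n (fun k => g k * ind (k == b%:Z - (nth 0%N lam b)%:Z) - g k * ind (k == b%:Z))).
  rewrite /isum exchange_big /=; apply: eq_bigr => t _.
  rewrite lemD // mulr_sumr; apply: eq_bigr => b _; by rewrite mulrBr.
apply: eq_big_nat => b /andP[_ hb].
have Hs := nth_le_sumn lam b.
rewrite isumB !isum_pt //; lia.
Qed.

Lemma maya_out lam j : is_partition lam ->
  (j < - (sumn lam)%:Z) || ((size lam)%:Z <= j) -> ind (maya lam j == 1) = ind (0 <= j).
Proof.
move=> Hp hj; apply/eqP; rewrite -subr_eq0; apply/eqP; rewrite lemD //.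
apply: big1_seq => b; rewrite mem_iota add0n => /andP[_ hb].
have := nth_le_sumn lam b; rewrite /ind; do 2 case: ifP; lia.
Qed.

Lemma maya_pm lam j : maya lam j = 1 \/ maya lam j = -1.
Proof. rewrite /maya /=; case: (0 <= j); [case: (_ == -1) | case: (_ == 1)]; auto. Qed.

Definition T (M : nat) (s : seq nat) (e : int) : int :=
  \sum_(0 <= b < M) pp (e - (b%:Z - (nth 0%N s b)%:Z)).

Lemma Text (s : seq nat) M e : (size s <= M)%N ->
  \sum_(0 <= b < size s) (pp (e - (b%:Z - (nth 0%N s b)%:Z)) - pp (e - b%:Z)) =
  T M s e - T M [::] e.
Proof.
move=> hM; rewrite /T -sumrB [in RHS](@big_cat_nat _ _ _ (size s)) //=.
rewrite [\sum_(size s <= i < M) _]big1_seq ?addr0.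
  by apply: eq_bigr => b _; rewrite nth_nil subr0.
move=> b /andP[_]; rewrite mem_index_iota => /andP[hb _].
by rewrite nth_default ?nth_nil ?subrr.
Qed.

Lemma sumn_take (s : seq nat) k :
  (sumn (take k s))%:Z = \sum_(0 <= b < k) (nth 0%N s b)%:Z.
Proof.
elim: s k => [|x s IH] k.
  by rewrite /= big1 // => b _; rewrite nth_nil.
case: k => [|k]; first by rewrite big_geq.
by rewrite /= big_nat_recl //= PoszD IH.
Qed.

Lemma prefix (y : nat -> int) M : (forall b1 b2, (b1 <= b2)%N -> y b2 <= y b1) ->
  exists k, [/\ (k <= M)%N, \sum_(0 <= b < M) pp (y b) = \sum_(0 <= b < k) y b
             & ((k < M)%N -> y k <= 0)].
Proof.
move=> Hy; elim: M => [|M [k [hk hs hlt]]].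
  by exists 0%N; split=> //; rewrite !big_geq.
rewrite big_nat_recr //=.
case: (ltnP k M) => hkM.
  have hyM : y M <= 0 by apply: le_trans (Hy _ _ (ltnW hkM)) (hlt hkM).
  exists k; split; [by apply: leqW | | by move=> _; apply: hlt].
  rewrite hs /pp; case: ifP => h; last by rewrite addr0.
  have -> : y M = 0 by lia.
  by rewrite addr0.
have ekM : k = M by apply/eqP; rewrite eqn_leq hk hkM.
subst k.
case: (boolP (0 < y M)) => hpos.
  exists M.+1; split=> //; last by rewrite ltnn.
  by rewrite big_nat_recr //= hs /pp ifT // ltW.
exists M; split; first exact: leqnSn.
  rewrite hs /pp; case: ifP => h; last by rewrite addr0.
  have -> : y M = 0 by lia.
  by rewrite addr0.
by move=> _; lia.
Qed.

Lemma T_ge0_ext (F : nat -> int) k M : (k <= M)%N ->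
  \sum_(0 <= b < k) pp (F b) <= \sum_(0 <= b < M) pp (F b).
Proof.
move=> hk; rewrite [X in _ <= X](@big_cat_nat _ _ _ k) //= lerDl.
by apply: sumr_ge0 => b _; rewrite /pp; case: ifP; lia.
Qed.

Lemma sum_le_pp (F : nat -> int) k : \sum_(0 <= b < k) F b <= \sum_(0 <= b < k) pp (F b).
Proof. by apply: ler_sum => b _; rewrite /pp; case: ifP; lia. Qed.

Lemma L1 lam mu M e : is_partition mu -> dominates lam mu -> T M mu e <= T M lam e.
Proof.
move=> Hmu Hd.
have [k [hk hs _]] := @prefix (fun b => e - (b%:Z - (nth 0%N mu b)%:Z)) M
   (fun b1 b2 h => ltac:(have := part_mono Hmu h; lia)).
rewrite /T hs.
apply: le_trans (T_ge0_ext (fun b => e - (b%:Z - (nth 0%N lam b)%:Z)) hk).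
apply: le_trans (sum_le_pp _ _).
have Hdk := Hd k.
have : (sumn (take k mu))%:Z <= (sumn (take k lam))%:Z by rewrite lez_nat.
rewrite !sumn_take => H.
rewrite [X in X <= _](eq_bigr (fun b => (e - b%:Z) + (nth 0%N mu b)%:Z)); last by move=> b _; ring.
rewrite [X in _ <= X](eq_bigr (fun b => (e - b%:Z) + (nth 0%N lam b)%:Z)); last by move=> b _; ring.
by rewrite !big_split /= lerD2l.
Qed.

Lemma L2 lam mu M : is_partition lam -> (size lam <= M)%N -> (size mu <= M)%N ->
  (forall e, T M mu e <= T M lam e) -> dominates lam mu.
Proof.
move=> Hlam hl hm He.
suff H : forall k, (k <= M)%N -> (sumn (take k mu) <= sumn (take k lam))%N.
  move=> k; case: (leqP k M) => hk; first exact: H.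
  rewrite !take_oversize; try by apply: leq_trans (ltnW hk).
  by have := H M (leqnn M); rewrite !take_oversize.
case=> [|k] hk; first by rewrite !take0.
rewrite -lez_nat !sumn_take.
pose e := k%:Z - (nth 0%N lam k)%:Z.
have HT : T M lam e = \sum_(0 <= b < k.+1) (e - (b%:Z - (nth 0%N lam b)%:Z)).
  rewrite /T (@big_cat_nat _ _ _ k.+1) //= [X in _ + X]big1_seq ?addr0.
    apply: eq_big_nat => b /andP[_ hb]; have := @part_mono lam b k Hlam hb.
    rewrite /pp /e; case: ifP; lia.
  move=> b /andP[_]; rewrite mem_index_iota => /andP[hb _]; have := @part_mono lam k b Hlam (ltnW hb).
  rewrite /pp /e; case: ifP; lia.
have := He e; rewrite HT => H.
have H2 := le_trans (sum_le_pp (fun b => e - (b%:Z - (nth 0%N mu b)%:Z)) k.+1)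
             (le_trans (T_ge0_ext (fun b => e - (b%:Z - (nth 0%N mu b)%:Z)) hk) H).
move: H2.
rewrite [X in X <= _ -> _](eq_bigr (fun b => (e - b%:Z) + (nth 0%N mu b)%:Z)); last by move=> b _; ring.
rewrite [X in _ <= X -> _](eq_bigr (fun b => (e - b%:Z) + (nth 0%N lam b)%:Z)); last by move=> b _; ring.
by rewrite !big_split /= lerD2l.
Qed.

Definition Bf l lam i (W : nat) (x : int) : int :=
  isum (- (W%:Z)) (2 * W) (fun j => pp (x - j) * ind (maya_comp l lam i j == 1)).

Lemma Bform l lam i nu k (W : nat) x : is_partition nu ->
  (forall j, maya nu j = maya_comp l lam i (j + k)) ->
  ((sumn nu + size nu + `|k|)%N <= W)%N ->
  Bf l lam i W x = (T (size nu) nu (x - k) - T (size nu) [::] (x - k)) +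
     isum (- (W%:Z)) (2 * W) (fun j => pp (x - j) * ind (k <= j)).
Proof.
move=> Hp H hW.
have Hm : forall j, maya_comp l lam i j = maya nu (j - k) by move=> j; rewrite H subrK.
rewrite /Bf.
pose F := (fun j' => pp (x - k - j') * (ind (maya nu j' == 1) - ind (0 <= j'))).
pose G := (fun j => pp (x - j) * ind (k <= j)).
transitivity (isum (- (W%:Z)) (2 * W) (fun j => F (j - k) + G j)).
  apply: isum_eq => j _; rewrite /F /G Hm.
  have -> : x - k - (j - k) = x - j by ring.
  rewrite subr_ge0; ring.
rewrite (isumD _ _ (fun j => F (j - k)) G) (isum_shift _ _ k F); congr (_ + _).
rewrite /F.
rewrite lemM //; last by lia.
  rewrite -Text //; apply: eq_bigr => b _; congr (pp _ - pp _); ring.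
lia.
Qed.

Lemma CW0 (m : int -> int) N : (forall j, m j = 1 \/ m j = -1) ->
  charge_win N m = isum (- (N%:Z)) (2 * N) (fun j => ind (m j == 1) - ind (0 <= j)).
Proof.
move=> Hm.
have -> : (2 * N = N + N)%N by lia.
rewrite isum_split addNr /charge_win !count_int; congr (_ + _).
  rewrite /isum big_nat_rev /index_iota subn0; apply: eq_big_seq => t; rewrite mem_iota => /andP[_ ht].
  rewrite add0n.
  have -> : - (N%:Z) + (N - t.+1)%N%:Z = - (t.+1%:Z) by lia.
  rewrite /ind; case: ifP => //; lia.
rewrite /isum /index_iota subn0 -sumrN; apply: eq_bigr => t _.
rewrite add0r /ind (_ : (0 <= t%:Z) = true) //; case: (Hm t) => -> /=; done.
Qed.

Lemma charge l lam i nu k : (0 < l)%N -> (i < l)%N -> is_partition lam -> is_partition nu ->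
  (forall j, maya nu j = maya_comp l lam i (j + k)) -> core_comp l lam i = - k.
Proof.
move=> hl hi Hlam Hnu H.
have Hm : forall j, maya_comp l lam i j = maya nu (j - k) by move=> j; rewrite H subrK.
rewrite /core_comp CW0; last by move=> j; apply: maya_pm.
set N := (size lam + sumn lam + l)%N.
pose W := (N + sumn nu + size nu + `|k|)%N.
have Hv : forall j, (j < - (N%:Z)) || (- (N%:Z) + (2 * N)%N%:Z <= j) ->
    ind (maya_comp l lam i j == 1) - ind (0 <= j) = 0.
  move=> j hj; rewrite /maya_comp.
  have hj' : (i%:Z + j * l%:Z < - (sumn lam)%:Z) || ((size lam)%:Z <= i%:Z + j * l%:Z).
    case/orP: hj => hj.
      have h1 : (j + 1) * l%:Z <= j + 1 by nia.
      rewrite /N in hj; apply/orP; left; nia.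
    rewrite /N in hj; apply/orP; right; nia.
  rewrite maya_out //.
  case/orP: hj => hj; rewrite /ind; do 2 case: ifP; try lia;
    rewrite /N in hj; nia.
rewrite -(@isum_ext (- (N%:Z)) (2 * N) (- (W%:Z)) (2 * W) _ Hv); [|lia|lia].
pose F := (fun j' => 1 * (ind (maya nu j' == 1) - ind (0 <= j'))).
pose G := (fun j => (ind (k <= j) - ind (0 <= j))).
transitivity (isum (- (W%:Z)) (2 * W) (fun j => F (j - k) + G j)).
  apply: isum_eq => j _; rewrite /F /G Hm subr_ge0; ring.
rewrite (isumD _ _ (fun j => F (j - k)) G) (isum_shift _ _ k F) /G.
rewrite (isumB _ _ (fun j => ind (k <= j)) (fun j => ind (0 <= j))) !isum_ge; try lia.
rewrite /F.
rewrite lemM; try lia.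
rewrite big1 ?add0r; first by rewrite /pp; do 2 case: ifP; lia.
by move=> b _; rewrite subrr.
Qed.

Lemma fin_bound (P : nat -> nat -> Prop) l :
  (forall i, (i < l)%N -> exists W0, forall W, (W0 <= W)%N -> P i W) ->
  exists W0, forall W, (W0 <= W)%N -> forall i, (i < l)%N -> P i W.
Proof.
elim: l => [|l IH] H; first by exists 0%N.
have [W1 H1] := IH (fun i hi => H i (ltnW hi)).
have [W2 H2] := H l (ltnSn l).
exists (W1 + W2)%N => W hW i; rewrite ltnS leq_eqVlt => /orP[/eqP ->|hi].
  by apply: H2; apply: leq_trans hW; apply: leq_addl.
by apply: H1 => //; apply: leq_trans hW; apply: leq_addr.
Qed.

Lemma Tdiff (s : seq nat) M e : (size s <= M)%N ->
  T (size s) s e - T (size s) [::] e = T M s e - T M [::] e.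
Proof. by move=> h; rewrite -!Text. Qed.

Lemma core_nth l lam i : (i < l)%N -> nth 0 (core l lam) i = core_comp l lam i.
Proof. by move=> hi; rewrite /core (nth_map 0%N) ?size_iota // nth_iota. Qed.

Lemma decomp (l : nat) (e i q r j : int) : e - i = q * l%:Z + r -> 0 <= r -> r < l%:Z ->
  pp (e - (i + j * l%:Z)) = (l%:Z - r) * pp (q - j) + r * pp (q + 1 - j).
Proof.
move=> he hr0 hrl; rewrite /pp.
case: (lerP j q) => hjq.
  rewrite ifT; last by nia.
  rewrite ifT; last by lia.
  rewrite ifT; last by lia.
  nia.
rewrite ifF; last by nia.
rewrite ifF; last by lia.
case: ifP => h; last by rewrite !mulr0 addr0.
have -> : q + 1 - j = 0 by lia.
by rewrite !mulr0 addr0.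
Qed.

Lemma per_runner l lam mu lq mq i : (0 < l)%N -> (i < l)%N ->
  is_partition lam -> is_partition mu ->
  is_quot_comp l lam i lq -> is_quot_comp l mu i mq ->
  core_comp l lam i = core_comp l mu i -> dominates lq mq ->
  exists W0, forall W, (W0 <= W)%N -> forall x, Bf l mu i W x <= Bf l lam i W x.
Proof.
move=> hl hi Hlam Hmu [Hq [k1 H1]] [Hq' [k2 H2]] Hc Hd.
have e12 : k1 = k2.
  have := charge hl hi Hlam Hq H1; have := charge hl hi Hmu Hq' H2.
  rewrite Hc => -> /eqP; rewrite eqr_opp => /eqP.
  by [].
subst k2.
exists (sumn lq + size lq + sumn mq + size mq + `|k1|)%N => W hW x.
rewrite (Bform _ Hq H1); last by lia.
rewrite (Bform _ Hq' H2); last by lia.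
rewrite lerD2r (@Tdiff lq (size lq + size mq)) ?leq_addr //.
rewrite (@Tdiff mq (size lq + size mq)) ?leq_addl // lerD2r.
exact: L1.
Qed.

Lemma runner_decomp l s i (W : nat) e : (0 < l)%N ->
  isum (- (W%:Z)) (2 * W)
    (fun j => pp (e - (i%:Z + j * l%:Z)) * ind (maya s (i%:Z + j * l%:Z) == 1)) =
  (l%:Z - ((e - i%:Z) %% l%:Z)%Z) * Bf l s i W ((e - i%:Z) %/ l%:Z)%Z +
  ((e - i%:Z) %% l%:Z)%Z * Bf l s i W (((e - i%:Z) %/ l%:Z)%Z + 1).
Proof.
move=> hl.
have hq := divz_eq (e - i%:Z) l%:Z.
have hr0 : 0 <= ((e - i%:Z) %% l%:Z)%Z by apply: modz_ge0; lia.
have hrl : ((e - i%:Z) %% l%:Z)%Z < l%:Z by apply: ltz_pmod; lia.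
move: hq hr0 hrl; set q := ((e - i%:Z) %/ l%:Z)%Z; set r := ((e - i%:Z) %% l%:Z)%Z => hq hr0 hrl.
rewrite /Bf /maya_comp -!isumZ -isumD; apply: isum_eq => j _.
rewrite (decomp j hq hr0 hrl); ring.
Qed.

Unset Implicit Arguments.

Theorem mainTheorem5 (l : nat) (hl : (0 < l)%N) (lam mu : seq nat)
  (lq mq : nat -> seq nat) :
  is_partition lam -> is_partition mu ->
  (forall i, (i < l)%N -> is_quot_comp l lam i (lq i)) ->
  (forall i, (i < l)%N -> is_quot_comp l mu i (mq i)) ->
  core l lam = core l mu ->
  (forall i, (i < l)%N -> sumn (lq i) = sumn (mq i) /\ dominates (lq i) (mq i)) ->
  dominates lam mu.
Proof.
move=> Hlam Hmu Hql Hqm Hcore Hdom.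
have Hce : forall i, (i < l)%N -> core_comp l lam i = core_comp l mu i.
  by move=> i hi; rewrite -!core_nth // Hcore.
have [W0 HW] := @fin_bound (fun i W => forall x, Bf l mu i W x <= Bf l lam i W x) l
  (fun i hi => per_runner hl hi Hlam Hmu (Hql i hi) (Hqm i hi) (Hce i hi) (Hdom i hi).2).
pose M := (size lam + size mu)%N.
apply: (@L2 lam mu M) => //; [exact: leq_addr | exact: leq_addl | move=> e].
pose W := (W0 + sumn lam + size lam + sumn mu + size mu)%N.
pose A s := isum (- (W%:Z) * l%:Z) (2 * W * l)
   (fun k => pp (e - k) * ind (maya s k == 1)).
pose V := isum (- (W%:Z) * l%:Z) (2 * W * l) (fun k => pp (e - k) * ind (0 <= k)).
have key : forall s, is_partition s -> (size s <= M)%N -> (sumn s <= W)%N ->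
    (size s <= W)%N -> T M s e - T M [::] e = A s - V.
  move=> s Hs hM h1 h2.
  rewrite -(Tdiff _ hM) -Text // -(@lemM s (- (W%:Z) * l%:Z) (2 * W * l) (fun k => pp (e - k))) //;
    try nia.
  rewrite /A /V -isumB; apply: isum_eq => k _; ring.
have kl := key lam Hlam (leq_addr _ _) ltac:(lia) ltac:(lia).
have km := key mu Hmu (leq_addl _ _) ltac:(lia) ltac:(lia).
suff : A mu <= A lam by lra.
rewrite /A !isum_runner.
apply: ler_sum_nat => i /andP[_ hi].
rewrite !runner_decomp //.
have hr0 : 0 <= ((e - i%:Z) %% l%:Z)%Z by apply: modz_ge0; lia.
have hrl : ((e - i%:Z) %% l%:Z)%Z < l%:Z by apply: ltz_pmod; lia.
have HWi := HW W ltac:(lia) i hi.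
apply: lerD; apply: ler_wpM2l; try lia; apply: HWi.
Qed.
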